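(* Let $F=(f_1,\dots,f_n)$ be twice-differentiable objective functions $\mathbb{R}^d\to\mathbb{R}$ with $\mu\mathbf{I}\preceq\nabla^2f_i\preceq L\mathbf{I}$ for all $i$ (where $0<\mu\le L$), and let $R:=\mathrm{diam}(\mathrm{Pareto}(F))$. Then the map $x^*:(\Delta^{n-1},\ell_1)\to(\mathbb{R}^d,\ell_2)$, $x^*(\beta)=\operatorname{argmin}_x\sum_i\beta_if_i(x)$, is $LR/\mu$-Lipschitz.
   Context: $\Delta^{n-1}$ is the simplex of convex weights. A point $x$ is Pareto optimal if for all $x'$, $f_i(x')<f_i(x)$ for some $i$ implies $f_j(x')>f_j(x)$ for some $j$; $\mathrm{Pareto}(F)$ is the set of Pareto optimal points, and $\mathrm{diam}$ is taken in $\ell_2$. *)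

(* Defs.v *)
From HB Require Import structures.
From mathcomp Require Import all_boot all_order all_algebra.
From mathcomp Require Import all_classical all_reals all_analysis.
Set Implicit Arguments. Unset Strict Implicit. Unset Printing Implicit Defensive.
Import Order.TTheory GRing.Theory Num.Theory.
Import numFieldNormedType.Exports.
Local Open Scope classical_set_scope.
Local Open Scope ring_scope.

Definition l2norm (R : realType) (d : nat) (v : 'rV[R]_d) : R :=
  Num.sqrt (\sum_(i < d) (v ord0 i) ^+ 2).

Definition l1dist (R : realType) (n : nat) (b b' : 'I_n -> R) : R :=
  \sum_(i < n) `|b i - b' i|.

Definition in_simplex (R : realType) (n : nat) (b : 'I_n -> R) : Prop :=
  (forall i, 0 <= b i) /\ \sum_(i < n) b i = 1.

Definition pareto_optimal (R : realType) (d n : nat)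
  (F : 'I_n -> 'rV[R]_d -> R) (x : 'rV[R]_d) : Prop :=
  forall x' : 'rV[R]_d, (exists i, F i x' < F i x) -> exists j, F j x < F j x'.

Definition Pareto (R : realType) (d n : nat) (F : 'I_n -> 'rV[R]_d -> R)
  : set 'rV[R]_d := [set x | pareto_optimal F x].

Definition diam2 (R : realType) (d : nat) (A : set 'rV[R]_d) : \bar R :=
  ereal_sup [set (l2norm (x - y))%:E | x in A & y in A].

Definition twice_differentiable (R : realType) (d : nat) (f : 'rV[R]_d -> R) : Prop :=
  (forall x, differentiable f x) /\
  (forall v x, differentiable ('D_v f) x).

(* mu I <= Hessian f(x) <= L I, written via the quadratic form v^T (Hess f x) v,
   which is the second directional derivative 'D_v ('D_v f) x. *)
Definition hessian_bounds (R : realType) (d : nat) (mu L : R)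
  (f : 'rV[R]_d -> R) : Prop :=
  forall x v : 'rV[R]_d,
    mu * (l2norm v) ^+ 2 <= 'D_v ('D_v f) x <= L * (l2norm v) ^+ 2.

Definition is_argmin (R : realType) (d n : nat) (F : 'I_n -> 'rV[R]_d -> R)
  (b : 'I_n -> R) (x : 'rV[R]_d) : Prop :=
  forall y, \sum_(i < n) b i * F i x <= \sum_(i < n) b i * F i y.

(* Main.v *)
Require Import Defs.
From HB Require Import structures.
From mathcomp Require Import all_boot all_order all_algebra.
From mathcomp Require Import all_classical all_reals all_analysis.
Import Order.TTheory GRing.Theory Num.Theory.
Import numFieldNormedType.Exports.
From mathcomp Require Import ring lra.
Local Open Scope classical_set_scope.
Local Open Scope ring_scope.

Section OneD.
Variable R : realType.

Lemma incr_of_deriv (g dg : R -> R) :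
  (forall t : R, is_derive t (1:R) g (dg t)) ->
  forall x y, x <= y -> (forall t, x <= t -> t <= y -> 0 <= dg t) -> g x <= g y.
Proof.
move=> Hd x y xy Hpos.
have cg : {within `[x, y], continuous g}.
  apply: continuous_subspaceT => t.
  apply: differentiable_continuous; rewrite -derivable1_diffP.
  exact: (@ex_derive _ _ _ _ _ _ _ (Hd t)).
have [c /andP[c1 c2] E] := MVT_segment xy (fun t _ => Hd t) cg.
rewrite -subr_ge0 E mulr_ge0 // ?subr_ge0 //.
by apply: Hpos; move: c1 c2; rewrite ?in_itv /=; rewrite ?bnd_simp.
Qed.
Arguments incr_of_deriv {g dg}.

Lemma conv0 (G G1 G2 : R -> R) :
  (forall t : R, is_derive t (1:R) G (G1 t)) ->
  (forall t : R, is_derive t (1:R) G1 (G2 t)) ->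
  G 0 = 0 -> G1 0 = 0 -> (forall t, 0 <= G2 t) -> forall t, 0 <= G t.
Proof.
move=> H1 H2 G0 G10 G2p t.
have mono : forall x y, x <= y -> G1 x <= G1 y.
  by move=> x y xy; apply: (incr_of_deriv H2 _ _ xy) => *; apply: G2p.
case: (lerP 0 t) => t0.
  rewrite -G0; apply: (incr_of_deriv H1 _ _ t0) => s s0 _.
  by rewrite -G10; apply: mono.
have H1' : forall s : R, is_derive s (1:R) (- G) (- G1 s).
  by move=> s; apply: is_deriveN.
have := incr_of_deriv H1' t 0 (ltW t0).
move=> h.
suff: - G t <= - G 0 by rewrite G0 oppr0 oppr_le0.
apply: h => s _ s0.
by rewrite oppr_ge0 -G10 mono.
Qed.

Lemma quad_bounds (phi phi1 phi2 : R -> R) (a b : R) :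
  (forall t : R, is_derive t (1:R) phi (phi1 t)) ->
  (forall t : R, is_derive t (1:R) phi1 (phi2 t)) ->
  (forall t, a <= phi2 t <= b) ->
  forall t, phi 0 + t * phi1 0 + a / 2 * t ^+ 2 <= phi t /\
            phi t <= phi 0 + t * phi1 0 + b / 2 * t ^+ 2.
Proof.
move=> H1 H2 Hab t; split.
- pose G := fun s => phi s - (phi 0 + s * phi1 0 + a / 2 * s ^+ 2).
  have : 0 <= G t.
    apply: (@conv0 G (fun s => phi1 s - (phi1 0 + a * s)) (fun s => phi2 s - a)).
    + move=> s; rewrite /G.
      have -> : (fun s => phi s - (phi 0 + s * phi1 0 + a / 2 * s ^+ 2)) =
        phi - (cst (phi 0) + phi1 0 \*: id + (a/2) \*: (id ^+ 2)).
        by apply/funext => x /=; rewrite mulrC.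
      apply: is_derive_eq.
      by rewrite /= expr1 /GRing.scale /=; field.
    + move=> s.
      have -> : (fun s => phi1 s - (phi1 0 + a * s)) =
        phi1 - (cst (phi1 0) + a \*: id).
        by apply/funext => x /=.
      apply: is_derive_eq.
      by rewrite /GRing.scale /=; field.
    + by rewrite /G; field.
    + by rewrite /=; field.
    + by move=> s; rewrite subr_ge0; case/andP: (Hab s).
  by rewrite /G subr_ge0.
- pose G := fun s => (phi 0 + s * phi1 0 + b / 2 * s ^+ 2) - phi s.
  have : 0 <= G t.
    apply: (@conv0 G (fun s => (phi1 0 + b * s) - phi1 s) (fun s => b - phi2 s)).
    + move=> s; rewrite /G.
      have -> : (fun s => (phi 0 + s * phi1 0 + b / 2 * s ^+ 2) - phi s) =
        (cst (phi 0) + phi1 0 \*: id + (b/2) \*: (id ^+ 2)) - phi.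
        by apply/funext => x /=; rewrite mulrC.
      apply: is_derive_eq.
      by rewrite /= expr1 /GRing.scale /=; field.
    + move=> s.
      have -> : (fun s => (phi1 0 + b * s) - phi1 s) =
        (cst (phi1 0) + b \*: id) - phi1.
        by apply/funext => x /=.
      apply: is_derive_eq.
      by rewrite /GRing.scale /=; field.
    + by rewrite /G; field.
    + by rewrite /=; field.
    + by move=> s; rewrite subr_ge0; case/andP: (Hab s).
  by rewrite /G subr_ge0.
Qed.

Lemma mvt_lb (phi1 phi2 : R -> R) (a : R) :
  (forall t : R, is_derive t (1:R) phi1 (phi2 t)) ->
  (forall t, a <= phi2 t) -> a <= phi1 1 - phi1 0.
Proof.
move=> H2 Ha.
have cg : {within `[0, 1], continuous phi1}.
  apply: continuous_subspaceT => t.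
  apply: differentiable_continuous; rewrite -derivable1_diffP.
  exact: (@ex_derive _ _ _ _ _ _ _ (H2 t)).
have [c _ E] := MVT_segment ler01 (fun t _ => H2 t) cg.
by rewrite E subr0 mulr1.
Qed.
End OneD.
Arguments quad_bounds {R phi phi1 phi2 a b}.
Arguments mvt_lb {R phi1 phi2 a}.

Section Line.
Variables (R : realType) (d : nat).
Implicit Types (f : 'rV[R]_d -> R) (p v : 'rV[R]_d).

Lemma line_is_derive f p v (t : R) : derivable f (p + t *: v) v ->
  is_derive t (1:R) (fun s => f (p + s *: v)) ('D_v f (p + t *: v)).
Proof.
move=> df.
have E : (fun h : R => h^-1 *: (((fun s => f (p + s *: v)) \o shift t) (h *: 1)
              - f (p + t *: v))) =
         (fun h : R => h^-1 *: ((f \o shift (p + t *: v)) (h *: v) - f (p + t *: v))).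
  apply/funext => h /=; congr (_ *: (f _ - _)).
  by rewrite [h%:A]mulr1 scalerDl addrCA addrA.
split; first by rewrite /derivable E.
by rewrite /derive E.
Qed.

Lemma line_facts f (mu L : R) : twice_differentiable f -> hessian_bounds mu L f ->
  forall p v (t : R),
   f p + t * 'D_v f p + mu * l2norm v ^+ 2 / 2 * t ^+ 2 <= f (p + t *: v) /\
   f (p + t *: v) <= f p + t * 'D_v f p + L * l2norm v ^+ 2 / 2 * t ^+ 2.
Proof.
move=> [d1 d2] hb p v t.
have H1 : forall s : R, is_derive s (1:R) (fun s => f (p + s *: v)) ('D_v f (p + s *: v)).
  by move=> s; apply: line_is_derive; apply: diff_derivable.
have H2 : forall s : R, is_derive s (1:R) (fun s => 'D_v f (p + s *: v))
                         ('D_v ('D_v f) (p + s *: v)).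
  by move=> s; apply: (@line_is_derive ('D_v f)); apply: diff_derivable.
have := quad_bounds H1 H2 (fun s => hb (p + s *: v) v) t.
by rewrite scale0r addr0.
Qed.

Lemma line_mono f (mu L : R) : twice_differentiable f -> hessian_bounds mu L f ->
  forall p v, mu * l2norm v ^+ 2 <= 'D_v f (p + v) - 'D_v f p.
Proof.
move=> [d1 d2] hb p v.
have H2 : forall s : R, is_derive s (1:R) (fun s => 'D_v f (p + s *: v))
                         ('D_v ('D_v f) (p + s *: v)).
  by move=> s; apply: (@line_is_derive ('D_v f)); apply: diff_derivable.
have := mvt_lb H2 (fun s => proj1 (andP (hb (p + s *: v) v))).
by rewrite scale0r addr0 scale1r.
Qed.
End Line.
Arguments line_is_derive {R d f p v t}.
Arguments line_facts {R d f mu L}.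
Arguments line_mono {R d f mu L}.
Section Alg.
Variable R : realType.

Lemma foc_alg (G c : R) : 0 <= c -> (forall t, 0 <= t * G + c * t ^+ 2) -> G = 0.
Proof.
move=> c0 H.
have c1 : 0 < c + 1 by rewrite ltr_pwDr.
have := H (- G / (c + 1)).
have -> : - G / (c + 1) * G + c * (- G / (c + 1)) ^+ 2 = - (G / (c + 1)) ^+ 2.
  by field; rewrite gt_eqF.
rewrite oppr_ge0 => h.
have : (G / (c + 1)) ^+ 2 = 0 by apply/eqP; rewrite eq_le h sqr_ge0.
move/eqP; rewrite sqrf_eq0 mulf_eq0 invr_eq0 (gt_eqF c1) orbF.
by move/eqP.
Qed.

Lemma gb_alg (D m c : R) : 0 <= c -> (forall t, - m <= t * D + c * t ^+ 2) ->
  D ^+ 2 <= 4 * c * m.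
Proof.
move=> c0 H.
case: (ltrP 0 c) => cp.
  have := H (- D / (2 * c)).
  have -> : - D / (2 * c) * D + c * (- D / (2 * c)) ^+ 2 = - (D ^+ 2 / (4 * c)).
    by field; rewrite gt_eqF.
  rewrite lerN2 => h.
  by rewrite -ler_pdivrMl ?mulr_gt0 // mulrC.
have c00 : c = 0 by apply/eqP; rewrite eq_le cp c0.
rewrite c00 mulr0 mul0r.
case: (eqVneq D 0) => [->|Dn0]; first by rewrite expr0n.
have := H (- (m + 1) / D); rewrite c00.
have -> : - (m + 1) / D * D + 0 * (- (m + 1) / D) ^+ 2 = - (m + 1) by field.
by rewrite lerN2 gerDl ler10.
Qed.

Lemma abs_le_of_sqr (D X : R) : 0 <= X -> D ^+ 2 <= X ^+ 2 -> `|D| <= X.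
Proof.
move=> X0 h.
by rewrite -sqrtr_sqr -[X in _ <= X](ger0_norm X0) -sqrtr_sqr ler_wsqrtr.
Qed.
End Alg.
Arguments gb_alg {R D m c}.
Arguments abs_le_of_sqr {R D X}.

Section L2.
Variables (R : realType) (d : nat).
Implicit Types (v : 'rV[R]_d).

Lemma l2norm_ge0 v : 0 <= l2norm v.
Proof. exact: sqrtr_ge0. Qed.

Lemma l2norm_sq v : l2norm v ^+ 2 = \sum_(i < d) (v ord0 i) ^+ 2.
Proof. by rewrite /l2norm sqr_sqrtr // sumr_ge0 // => i _; rewrite sqr_ge0. Qed.

Lemma l2norm_eq0 v : l2norm v = 0 -> v = 0.
Proof.
move=> /eqP; rewrite /l2norm sqrtr_eq0 => h.
have s0 : \sum_(i < d) (v ord0 i) ^+ 2 = 0.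
  by apply/eqP; rewrite eq_le h sumr_ge0 // => i _; rewrite sqr_ge0.
apply/matrixP => i j; rewrite mxE (ord1 i).
have := psumr_eq0P (fun i _ => sqr_ge0 (v ord0 i)) s0 (i := j) isT.
by move/eqP; rewrite sqrf_eq0 => /eqP.
Qed.

Lemma l2norm0 : l2norm (0 : 'rV[R]_d) = 0.
Proof.
rewrite /l2norm big1 ?sqrtr0 // => i _; by rewrite mxE expr0n.
Qed.

Lemma l2norm_coord v i : `|v ord0 i| <= l2norm v.
Proof.
rewrite -sqrtr_sqr /l2norm ler_wsqrtr // (bigD1 i) //= lerDl.
by rewrite sumr_ge0 // => j _; rewrite sqr_ge0.
Qed.
End L2.
Arguments l2norm_ge0 {R d}.
Arguments l2norm_eq0 {R d v}.
Arguments l2norm_coord {R d}.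

Section Main.
Variables (R : realType) (d n : nat).
Implicit Types (f : 'rV[R]_d -> R) (F : 'I_n -> 'rV[R]_d -> R).

Lemma single_foc f (mu L : R) : 0 <= L -> twice_differentiable f ->
  hessian_bounds mu L f -> forall y, (forall z, f y <= f z) ->
  forall w, 'D_w f y = 0.
Proof.
move=> L0 hf hb y ymin w.
apply: (@foc_alg _ _ (L * l2norm w ^+ 2 / 2)).
  by rewrite divr_ge0 // mulr_ge0 // sqr_ge0.
move=> t; have [_ h] := line_facts hf hb y w t.
have := le_trans (ymin _) h.
by rewrite -addrA lerDl.
Qed.

Lemma weighted_foc F (mu L : R) (b : 'I_n -> R) z : 0 <= L ->
  (forall i, twice_differentiable (F i)) -> (forall i, hessian_bounds mu L (F i)) ->
  in_simplex b -> is_argmin F b z ->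
  forall w, \sum_(i < n) b i * 'D_w (F i) z = 0.
Proof.
move=> L0 hf hb [b0 b1] zmin w.
set c := L * l2norm w ^+ 2 / 2.
apply: (@foc_alg _ _ c).
  by rewrite divr_ge0 // mulr_ge0 // sqr_ge0.
move=> t.
have h : \sum_(i < n) b i * F i (z + t *: w) <=
         \sum_(i < n) b i * (F i z + t * 'D_w (F i) z + c * t ^+ 2).
  apply: ler_sum => i _; apply: ler_wpM2l => //.
  by have [_ ->] := line_facts (hf i) (hb i) z w t.
have e : \sum_(i < n) b i * (F i z + t * 'D_w (F i) z + c * t ^+ 2) =
   \sum_(i < n) b i * F i z + (t * \sum_(i < n) b i * 'D_w (F i) z + c * t ^+ 2).
  rewrite (eq_bigr (fun i => b i * F i z + (t * (b i * 'D_w (F i) z) + c * t ^+ 2 * b i))); last by move=> i _; ring.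
  by rewrite big_split big_split /= -mulr_sumr -mulr_sumr b1 mulr1.
have := le_trans (zmin _) h; rewrite e.
by rewrite lerDl.
Qed.

Lemma grad_bound f (mu L : R) : 0 <= L -> twice_differentiable f ->
  hessian_bounds mu L f -> forall y, (forall z, f y <= f z) ->
  forall x v, `|'D_v f x| <= L * l2norm v * l2norm (x - y).
Proof.
move=> L0 hf hb y ymin x v.
apply: abs_le_of_sqr.
  by rewrite !mulr_ge0 // l2norm_ge0.
set c := L * l2norm v ^+ 2 / 2.
have c0 : 0 <= c by rewrite divr_ge0 // mulr_ge0 // sqr_ge0.
have h1 : 'D_v f x ^+ 2 <= 4 * c * (f x - f y).
  apply: gb_alg => // t.
  have [_ h] := line_facts hf hb x v t.
  have := le_trans (ymin _) h.
  by rewrite -addrA -lerBlDl opprB addrC.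
have h2 : f x - f y <= L * l2norm (x - y) ^+ 2 / 2.
  have [_ h] := line_facts hf hb y (x - y) 1.
  move: h; rewrite scale1r addrC subrK (@single_foc f mu L L0 hf hb y ymin) mulr0 addr0.
  by rewrite expr1n mulr1 lerBlDl.
apply: (le_trans h1).
have -> : (L * l2norm v * l2norm (x - y)) ^+ 2 = 4 * c * (L * l2norm (x - y) ^+ 2 / 2).
  by rewrite /c; field.
by apply: ler_wpM2l => //; rewrite mulr_ge0.
Qed.

Lemma pareto_of_argmin F (mu L : R) (b : 'I_n -> R) z : 0 < mu ->
  (forall i, twice_differentiable (F i)) -> (forall i, hessian_bounds mu L (F i)) ->
  in_simplex b -> is_argmin F b z -> Pareto F z.
Proof.
move=> mu0 hf hb [b0 b1] zmin z' [i hi].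
case: (pselect (exists j, F j z < F j z')) => // hn; exfalso.
have all : forall j, F j z' <= F j z.
  move=> j; rewrite leNgt; apply/negP => hj; apply: hn; exists j => //.
set u := z' - z.
set m := z + (1/2) *: u.
set c := mu * l2norm u ^+ 2 / 2.
have e1 : m + (1/2) *: u = z'.
  rewrite /m -addrA -scalerDl.
  have -> : (1/2 + 1/2 : R) = 1 by field.
  by rewrite scale1r /u addrC subrK.
have e2 : m + (- (1/2)) *: u = z.
  by rewrite /m -addrA -scalerDl addrN scale0r addr0.
have hm : forall j, F j m <= F j z - c / 4.
  move=> j.
  have [h1 _] := line_facts (hf j) (hb j) m u (1/2).
  have [h2 _] := line_facts (hf j) (hb j) m u (- (1/2)).
  rewrite e1 in h1; rewrite e2 in h2.
  have := all j.
  rewrite /c. move: h1 h2; set D := 'D_u (F j) m; set s := l2norm u ^+ 2.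
  move=> h1 h2 h3.
  have h4 : F j m + 1 / 2 * D + mu * s / 2 * (1 / 2) ^+ 2 +
     (F j m + - (1 / 2) * D + mu * s / 2 * (- (1 / 2)) ^+ 2) <= F j z + F j z.
    by apply: lerD => //; apply: le_trans h1 h3.
  move: h4.
  have -> : F j m + 1 / 2 * D + mu * s / 2 * (1 / 2) ^+ 2 +
     (F j m + - (1 / 2) * D + mu * s / 2 * (- (1 / 2)) ^+ 2) =
     2 * (F j m + mu * s / 2 / 4) by field.
  have -> : F j z + F j z = 2 * F j z by field.
  by rewrite ler_pM2l // lerBrDr.
have hsum : \sum_(j < n) b j * F j m <= \sum_(j < n) b j * F j z - c / 4.
  have -> : \sum_(j < n) b j * F j z - c / 4 = \sum_(j < n) b j * (F j z - c / 4).
    rewrite [c / 4 in LHS](_ : _ = (\sum_(j < n) b j) * (c / 4)); last by rewrite b1 mul1r.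
    by rewrite mulr_suml -sumrB; apply: eq_bigr => j _; ring.
  by apply: ler_sum => j _; apply: ler_wpM2l.
have := le_trans (zmin m) hsum.
rewrite lerBrDr gerDl => hc.
have c0 : c = 0.
  apply/eqP; rewrite eq_le; rewrite pmulr_lle0 ?invr_gt0 // in hc.
  rewrite hc /=; apply: divr_ge0 => //; apply: mulr_ge0; [exact: ltW | exact: sqr_ge0].
have s0 : l2norm u ^+ 2 = 0.
  have -> : l2norm u ^+ 2 = c * 2 / mu by rewrite /c; field; rewrite gt_eqF.
  by rewrite c0 !mul0r.
move/eqP: s0; rewrite sqrf_eq0 => /eqP /l2norm_eq0 /eqP; rewrite /u subr_eq0 => /eqP ez.
by move: hi; rewrite ez ltxx.
Qed.

Lemma exists_min f (mu L : R) : 0 < mu -> twice_differentiable f ->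
  hessian_bounds mu L f -> exists y, forall z, f y <= f z.
Proof.
move=> mu0 hf hb.
have [d1 _] := hf.
set C := \sum_(k < d) `|'d f 0 ('e_k : 'rV[R]_d)|.
have C0 : 0 <= C by rewrite sumr_ge0.
have lin : forall u : 'rV[R]_d, `|'D_u f 0| <= C * l2norm u.
  move=> u; rewrite deriveE //.
  have -> : 'd f 0 u = \sum_(k < d) u 0 k * 'd f 0 ('e_k : 'rV[R]_d).
    rewrite {1}(row_sum_delta u) linear_sum; apply: eq_bigr => k _.
    by rewrite linearZ.
  apply: (le_trans (ler_norm_sum _ _ _)).
  rewrite /C mulr_suml; apply: ler_sum => k _.
  rewrite normrM mulrC; apply: ler_wpM2l => //.
  exact: l2norm_coord.
have lb : forall u, f 0 + l2norm u * (mu * l2norm u / 2 - C) <= f u.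
  move=> u; have [h _] := line_facts hf hb 0 u 1.
  move: h; rewrite scale1r add0r expr1n mulr1 mul1r.
  apply: le_trans.
  have : - (C * l2norm u) <= 'D_u f 0 by rewrite lerNl; apply: le_trans (lin u); rewrite -normrN ler_norm.
  move=> h.
  have -> : f 0 + l2norm u * (mu * l2norm u / 2 - C) =
            f 0 + - (C * l2norm u) + mu * l2norm u ^+ 2 / 2 by ring.
  by rewrite lerD2r lerD2l.
set r := 2 * C / mu.
have r0 : 0 <= r by rewrite divr_ge0 ?mulr_ge0 // ltW.
set K := [set v : 'rV[R]_d | forall i, `[(- r), r]%classic (v ord0 i)].
have Kc : compact K.
  by apply: (@rV_compact _ _ (fun=> `[(- r), r]%classic)) => _; apply: segment_compact.
have K0 : K 0.
  by move=> i; rewrite /= mxE in_itv /= oppr_le0 r0.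
have Kn : K !=set0 by exists 0.
have cf : {within K, continuous f}.
  apply: continuous_subspaceT => t.
  exact: differentiable_continuous.
have [c cK cmin] := compact_EVT_min Kn Kc cf.
exists c => z.
case: (pselect (K z)) => Kz; first by apply: cmin; rewrite inE.
have [i hi] : exists i, ~ `[(- r), r]%classic (z ord0 i).
  by apply/existsNP => h; apply: Kz.
have zi : r < `|z ord0 i|.
  rewrite ltNge; apply/negP => h; apply: hi.
  by rewrite /= in_itv /= -ler_norml.
have zl : r < l2norm z by apply: (lt_le_trans zi); exact: l2norm_coord.
apply: (le_trans (cmin 0 _)); first by rewrite inE.
apply: le_trans (lb z).
rewrite lerDl mulr_ge0 // ?l2norm_ge0 // subr_ge0.
have : 2 * C / mu * mu / 2 <= mu * l2norm z / 2.
  rewrite ler_pM2r ?invr_gt0 // mulrC ler_pM2l //; exact: ltW.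
by have -> : 2 * C / mu * mu / 2 = C by field; rewrite gt_eqF.
Qed.

Lemma sum_e (i : 'I_n) (a : 'I_n -> R) :
  \sum_(j < n) (j == i)%:R * a j = a i.
Proof.
rewrite (bigD1 i) //= eqxx mul1r big1 ?addr0 // => j /negbTE ->.
by rewrite mul0r.
Qed.

Lemma e_simplex (i : 'I_n) : in_simplex (fun j : 'I_n => ((j == i)%:R : R)).
Proof.
split; first by move=> j; rewrite ler0n.
by have := sum_e i (fun=> 1); under eq_bigr do rewrite mulr1; rewrite /= => ->.
Qed.
End Main.
Arguments single_foc {R d f mu L}.
Arguments weighted_foc {R d n F mu L b z}.
Arguments grad_bound {R d f mu L}.
Arguments pareto_of_argmin {R d n F mu L b z}.
Arguments exists_min {R d f mu L}.
Arguments sum_e {R n}.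
Arguments e_simplex {R n}.

Theorem lemma8 (R : realType) (d n : nat) (F : 'I_n -> 'rV[R]_d -> R) (mu L : R) :
  0 < mu -> mu <= L ->
  (forall i, twice_differentiable (F i)) ->
  (forall i, hessian_bounds mu L (F i)) ->
  forall (b b' : 'I_n -> R) (x x' : 'rV[R]_d),
    in_simplex b -> in_simplex b' ->
    is_argmin F b x -> is_argmin F b' x' ->
    ((l2norm (x - x'))%:E <=
       (L / mu)%:E * diam2 (Pareto F) * (l1dist b b')%:E)%E.
Proof.
move=> mu0 muL hf hb b b' x x' hs hs' xmin x'min.
have L0 : 0 <= L := le_trans (ltW mu0) muL.
set v := x - x'.
have foc1 := weighted_foc L0 hf hb hs xmin v.
have foc2 := weighted_foc L0 hf hb hs' x'min v.
have key : mu * l2norm v ^+ 2 <= \sum_(i < n) (b' i - b i) * 'D_v (F i) x.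
  have -> : \sum_(i < n) (b' i - b i) * 'D_v (F i) x =
     \sum_(i < n) b' i * ('D_v (F i) x - 'D_v (F i) x').
    rewrite [LHS](eq_bigr (fun i => b' i * 'D_v (F i) x - b i * 'D_v (F i) x)); last by move=> i _; ring.
    rewrite sumrB foc1 subr0.
    rewrite [RHS](eq_bigr (fun i => b' i * 'D_v (F i) x - b' i * 'D_v (F i) x')); last by move=> i _; ring.
    by rewrite sumrB foc2 subr0.
  have -> : mu * l2norm v ^+ 2 = \sum_(i < n) b' i * (mu * l2norm v ^+ 2).
    by rewrite -mulr_suml (proj2 hs') mul1r.
  apply: ler_sum => i _; apply: ler_wpM2l; first exact: (proj1 hs').
  have := line_mono (hf i) (hb i) x' v.
  by rewrite [x' + v]addrC /v subrK.
have px : Pareto F x := pareto_of_argmin mu0 hf hb hs xmin.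
have D0 : (0 <= diam2 (Pareto F))%E.
  apply: ereal_sup_ubound; exists x => //; exists x => //.
  by rewrite subrr l2norm0.
have l10 : 0 <= l1dist b b' by rewrite sumr_ge0.
have l2v0 : 0 <= l2norm v := l2norm_ge0 v.
case: (eqVneq (l1dist b b') 0) => [l1z|l1nz].
  have bz : forall i, b' i - b i = 0.
    move=> i; apply/eqP; rewrite -normr_eq0 distrC; apply/eqP.
    exact: (psumr_eq0P (fun i _ => normr_ge0 (b i - b' i)) l1z).
  move: key; rewrite (eq_bigr (fun=> 0)); last by move=> i _; rewrite bz mul0r.
  rewrite big1 // => key.
  have s0 : l2norm v ^+ 2 = 0.
    apply/eqP; rewrite eq_le sqr_ge0 andbT.
    by rewrite -(pmulr_rle0 _ mu0).
  move/eqP: s0; rewrite sqrf_eq0 => /eqP ->.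
  by rewrite l1z mule0.
have l1p : 0 < l1dist b b' by rewrite lt_def l1nz l10.
case E: (diam2 (Pareto F)) => [r| |]; rewrite E in D0; last by [].
  2: by rewrite gt0_muley ?lte_fin ?divr_gt0 ?(lt_le_trans mu0) // gt0_mulye ?lte_fin // leey.
rewrite lee_fin in D0.
have Dbound : forall i, `|'D_v (F i) x| <= L * l2norm v * r.
  move=> i.
  have [y ymin] := exists_min mu0 (hf i) (hb i).
  have yP : Pareto F y.
    apply: (pareto_of_argmin mu0 hf hb (e_simplex i)) => z.
    by rewrite !sum_e.
  have yr : l2norm (x - y) <= r.
    rewrite -lee_fin -E; apply: ereal_sup_ubound; exists x => //; exists y => //.
  apply: (le_trans (grad_bound L0 (hf i) (hb i) y ymin x v)).
  by apply: ler_wpM2l => //; rewrite mulr_ge0.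
have key2 : mu * l2norm v ^+ 2 <= l1dist b b' * (L * l2norm v * r).
  apply: (le_trans key); rewrite /l1dist mulr_suml; apply: ler_sum => i _.
  apply: (le_trans (ler_norm _)); rewrite normrM distrC.
  by apply: ler_wpM2l => //.
rewrite -!EFinM lee_fin.
case: (eqVneq (l2norm v) 0) => [->|vnz].
  by rewrite mulr_ge0 // mulr_ge0 // divr_ge0 // ltW.
have vp : 0 < l2norm v by rewrite lt_def vnz l2v0.
have h : mu * l2norm v <= l1dist b b' * L * r.
  rewrite -(ler_pM2r vp).
  have -> : mu * l2norm v * l2norm v = mu * l2norm v ^+ 2 by rewrite expr2 mulrA.
  have -> : l1dist b b' * L * r * l2norm v = l1dist b b' * (L * l2norm v * r) by ring.
  exact: key2.
have -> : L / mu * r * l1dist b b' = (l1dist b b' * L * r) / mu.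
  by field; rewrite gt_eqF.
by rewrite ler_pdivlMr // mulrC.
Qed.
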